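(* Let $0<\epsilon<1/2$, $0<\rho<1$, $C=1-h(\epsilon)$, $0<R<C$ fixed, and $k=\lfloor Rn\rfloor$. There exists $\delta>0$ such that for every sequence of integers $(i_n)$ with $i_n\in(n(\epsilon-\delta),n(\epsilon+\delta))$, \[ \lim_{n\to\infty}\frac{\sum_{j=0}^{k}\binom{k}{j}\big(1-(1-2\epsilon)(1-2\rho)^j\big)^{i_n}\big(1+(1-2\epsilon)(1-2\rho)^j\big)^{n-i_n}}{2^n\epsilon^{i_n}(1-\epsilon)^{n-i_n}}=1 . \]
   Context: $h(\epsilon)=-\epsilon\log_2\epsilon-(1-\epsilon)\log_2(1-\epsilon)$. *)

(* Defs.v *)
From Stdlib Require Import Reals Lra Lia ZArith.
Open Scope R_scope.

Definition log2 (x : R) : R := ln x / ln 2.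

Definition h (e : R) : R := - e * log2 e - (1 - e) * log2 (1 - e).

(* floor of a real number (Int_part x = up x - 1 is the floor) *)
Definition floorZ (x : R) : Z := Int_part x.

Definition num_term (eps rho Rt : R) (n : nat) (i : Z) : R :=
  let k := Z.to_nat (floorZ (Rt * INR n)) in
  sum_f_R0 (fun j =>
     C k j
     * powerRZ (1 - (1 - 2 * eps) * (1 - 2 * rho) ^ j) i
     * powerRZ (1 + (1 - 2 * eps) * (1 - 2 * rho) ^ j) (Z.of_nat n - i)) k.

Definition den_term (eps : R) (n : nat) (i : Z) : R :=
  2 ^ n * powerRZ eps i * powerRZ (1 - eps) (Z.of_nat n - i).

(* Main.v *)
Require Import Defs.
From Stdlib Require Import Reals Lra Lia ZArith.
Open Scope R_scope.

Lemma exp_le_m (a b : R) : a <= b -> exp a <= exp b.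
Proof. intros H; destruct (Rle_lt_or_eq_dec _ _ H) as [H1|H1].
  left; now apply exp_increasing. subst; lra. Qed.

Lemma ln_le_m (a b : R) : 0 < a -> a <= b -> ln a <= ln b.
Proof. intros H H0; destruct (Rle_lt_or_eq_dec _ _ H0) as [H1|H1].
  left; now apply ln_increasing. subst; lra. Qed.

Lemma ln_le_xm1 (x : R) : 0 < x -> ln x <= x - 1.
Proof. intros H. pose proof (exp_ineq1_le (ln x)). rewrite exp_ln in H0; lra. Qed.

Lemma ln_diff (x y : R) : 0 < x -> 0 < y -> ln x - ln y <= x / y - 1.
Proof. intros Hx Hy.
  replace (ln x - ln y) with (ln (x / y)).
  apply ln_le_xm1. apply Rdiv_lt_0_compat; auto.
  unfold Rdiv. rewrite ln_mult, ln_Rinv; auto. apply Rinv_0_lt_compat; auto. Qed.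

Lemma C_nonneg (n j : nat) : 0 <= C n j.
Proof. unfold C. left. apply Rdiv_lt_0_compat. apply INR_fact_lt_0.
  apply Rmult_lt_0_compat; apply INR_fact_lt_0. Qed.

Lemma C_n0 (n : nat) : C n 0 = 1.
Proof. unfold C. simpl. rewrite Nat.sub_0_r. field. apply INR_fact_neq_0. Qed.

Lemma pow_le1_dec (x : R) (J j : nat) : 0 <= x <= 1 -> (J <= j)%nat -> x ^ j <= x ^ J.
Proof. intros Hx HJ. replace j with (J + (j - J))%nat by lia. rewrite pow_add.
  assert (0 <= x ^ J) by (apply pow_le; lra).
  assert (x ^ (j - J) <= 1). { rewrite <- (pow1 (j - J)). apply pow_incr; lra. }
  assert (0 <= x ^ (j-J)) by (apply pow_le; lra). nra. Qed.

Definition Fe (eps a : R) := eps * ln ((1-a)/(2*eps)) + (1-eps) * ln ((1+a)/(2*(1-eps))).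

Lemma KI (eps a b : R) : 0 < eps < 1 -> -1 < a < 1 -> -1 < b < 1 ->
  Fe eps a - Fe eps b <= (b - a) * (eps / (1 - b) - (1 - eps) / (1 + b)).
Proof. intros He Ha Hb. unfold Fe.
  assert (H1 := ln_diff ((1-a)/(2*eps)) ((1-b)/(2*eps))).
  assert (H2 := ln_diff ((1+a)/(2*(1-eps))) ((1+b)/(2*(1-eps)))).
  assert (P1: 0 < (1-a)/(2*eps)) by (apply Rdiv_lt_0_compat; lra).
  assert (P2: 0 < (1-b)/(2*eps)) by (apply Rdiv_lt_0_compat; lra).
  assert (P3: 0 < (1+a)/(2*(1-eps))) by (apply Rdiv_lt_0_compat; lra).
  assert (P4: 0 < (1+b)/(2*(1-eps))) by (apply Rdiv_lt_0_compat; lra).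
  specialize (H1 P1 P2). specialize (H2 P3 P4).
  replace ((1 - a) / (2 * eps) / ((1 - b) / (2 * eps))) with ((1-a)/(1-b)) in H1 by (field; lra).
  replace ((1 + a) / (2 * (1 - eps)) / ((1 + b) / (2 * (1 - eps)))) with ((1+a)/(1+b)) in H2 by (field; lra).
  assert (E: (b - a) * (eps / (1 - b) - (1 - eps) / (1 + b)) =
     eps * ((1-a)/(1-b) - 1) + (1 - eps) * ((1+a)/(1+b) - 1)) by (field; lra).
  rewrite E. nra. Qed.

Lemma Fe_a0 (eps : R) : 0 < eps < 1 -> Fe eps (1 - 2*eps) = 0.
Proof. intros H. unfold Fe.
  replace ((1 - (1 - 2 * eps)) / (2 * eps)) with 1 by (field; lra).
  replace ((1 + (1 - 2 * eps)) / (2 * (1 - eps))) with 1 by (field; lra).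
  rewrite ln_1. ring. Qed.

Lemma ln2_pos : 0 < ln 2.
Proof. rewrite <- ln_1. apply ln_increasing; lra. Qed.

Lemma Fe_0 (eps : R) : 0 < eps < 1 -> Fe eps 0 = - (1 - h eps) * ln 2.
Proof. intros H. unfold Fe, h, log2.
  replace ((1 - 0) / (2 * eps)) with (/ (2*eps)) by (field; lra).
  replace ((1 + 0) / (2 * (1 - eps))) with (/ (2*(1-eps))) by (field; lra).
  rewrite !ln_Rinv, !ln_mult; try lra.
  pose proof ln2_pos. field. lra. Qed.

Lemma sum_div (f : nat -> R) (d : R) (k : nat) :
  sum_f_R0 f k / d = sum_f_R0 (fun j => f j / d) k.
Proof. induction k; simpl. reflexivity. rewrite <- IHk. unfold Rdiv; ring. Qed.

Lemma term_eq (eps a Cc : R) (n m : nat) : 0 < eps < 1 -> (m <= n)%nat ->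
  Cc * powerRZ (1-a) (Z.of_nat m) * powerRZ (1+a) (Z.of_nat n - Z.of_nat m)
   / den_term eps n (Z.of_nat m)
  = Cc * ((1-a)/(2*eps))^m * ((1+a)/(2*(1-eps)))^(n-m).
Proof. intros He Hm. unfold den_term. rewrite <- Nat2Z.inj_sub by auto.
  rewrite <- !pow_powerRZ.
  replace (2^n) with (2^m * 2^(n-m)) by (rewrite <- pow_add; f_equal; lia).
  unfold Rdiv. rewrite !Rpow_mult_distr, !pow_inv.
  rewrite !Rpow_mult_distr.
  field. repeat split; apply pow_nonzero; lra. Qed.

Lemma term_bound (eps a delta : R) (n m : nat) : 0 < eps < 1/2 ->
  -(1-2*eps) <= a <= 1 - 2*eps -> (m <= n)%nat -> 0 <= delta ->
  INR m <= INR n * (eps + delta) ->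
  ((1-a)/(2*eps))^m * ((1+a)/(2*(1-eps)))^(n-m)
    <= exp (INR n * (Fe eps a + (ln (/eps) - ln eps) * delta)).
Proof. intros He Ha Hm Hd Hmn.
  rename Ha into Ha'.
  set (u := (1-a)/(2*eps)). set (v := (1+a)/(2*(1-eps))).
  assert (Pu: 0 < u) by (apply Rdiv_lt_0_compat; lra).
  assert (Pv: 0 < v) by (apply Rdiv_lt_0_compat; lra).
  assert (Huv: v <= u). { unfold u, v. apply Rmult_le_reg_r with (2*eps*(2*(1-eps))). nra.
     unfold Rdiv. replace ((1 + a) * / (2 * (1 - eps)) * (2 * eps * (2 * (1 - eps)))) with ((1+a)*(2*eps)) by (field; lra).
     replace ((1 - a) * / (2 * eps) * (2 * eps * (2 * (1 - eps)))) with ((1-a)*(2*(1-eps))) by (field; lra). nra. }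
  assert (Hu: u <= / eps). { unfold u. unfold Rdiv. apply Rmult_le_reg_r with (2*eps). lra.
     replace ((1 - a) * / (2 * eps) * (2 * eps)) with (1-a) by (field; lra).
     replace (/ eps * (2*eps)) with 2 by (field; lra). lra. }
  assert (Hv: eps <= v). { unfold v. unfold Rdiv. apply Rmult_le_reg_r with (2*(1-eps)). lra.
     replace ((1 + a) * / (2 * (1 - eps)) * (2 * (1 - eps))) with (1+a) by (field; lra). nra. }
  assert (D0: 0 <= ln u - ln v) by (pose proof (ln_le_m v u Pv Huv); lra).
  assert (DK: ln u - ln v <= ln (/eps) - ln eps) by
     (pose proof (ln_le_m u (/eps) Pu Hu); pose proof (ln_le_m eps v ltac:(lra) Hv); lra).
  rewrite <- (exp_ln (u^m)), <- (exp_ln (v^(n-m))) by (apply pow_lt; auto).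
  rewrite <- exp_plus. apply exp_le_m. rewrite !ln_pow by auto.
  rewrite minus_INR by auto. unfold Fe. fold u v.
  pose proof (pos_INR n). pose proof (pos_INR m).
  assert (0 <= (INR n * (eps + delta) - INR m) * (ln u - ln v)) by (apply Rmult_le_pos; lra).
  assert (0 <= (INR n * delta) * (ln (/eps) - ln eps - (ln u - ln v))) by (apply Rmult_le_pos; [apply Rmult_le_pos|]; lra).
  nra. Qed.

Lemma exp_pow_n (y : R) (n : nat) : exp (INR n * y) = exp y ^ n.
Proof. induction n. simpl. rewrite Rmult_0_l, exp_0; auto.
  rewrite S_INR, Rmult_plus_distr_r, Rmult_1_l, exp_plus, IHn. simpl. ring. Qed.

Lemma sum_ge_first (f : nat -> R) (k : nat) : (forall j, 0 <= f j) -> f 0%nat <= sum_f_R0 f k.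
Proof. intros H; induction k; simpl. lra. specialize (H (S k)). lra. Qed.

Lemma sum_bound (f g : nat -> R) (k : nat) : f 0%nat <= 1 ->
  (forall j, (1 <= j)%nat -> f j <= g j) -> (forall j, 0 <= g j) ->
  sum_f_R0 f k <= 1 + sum_f_R0 g k.
Proof. intros H0 H1 H2; induction k; simpl. specialize (H2 0%nat). lra.
  specialize (H1 (S k) ltac:(lia)). lra. Qed.

Lemma sum_lin (f g : nat -> R) (A B : R) (k : nat) :
  sum_f_R0 (fun j => A * f j + B * g j) k = A * sum_f_R0 f k + B * sum_f_R0 g k.
Proof. induction k; simpl. ring. rewrite IHk. ring. Qed.

Lemma Fe_small (eps a mm a1 : R) : 0 < eps < 1/2 -> -1 < a <= a1 -> a1 < mm < 1 - 2*eps ->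
  Fe eps a <= - ((mm - a1) * ((1-eps)/(1+mm) - eps/(1-mm))).
Proof. intros He Ha Hm.
  pose proof (KI eps a mm ltac:(lra) ltac:(lra) ltac:(lra)) as K1.
  pose proof (KI eps mm (1-2*eps) ltac:(lra) ltac:(lra) ltac:(lra)) as K2.
  rewrite Fe_a0 in K2 by lra.
  replace (eps / (1 - (1 - 2 * eps)) - (1 - eps) / (1 + (1 - 2 * eps))) with 0 in K2 by (field; lra).
  assert (B: (1-eps)/(1+mm) - eps/(1-mm) = (1 - 2*eps - mm)/((1+mm)*(1-mm))) by (field; lra).
  assert (Bp: 0 < (1 - 2*eps - mm)/((1+mm)*(1-mm))) by (apply Rdiv_lt_0_compat; nra).
  replace (eps / (1 - mm) - (1 - eps) / (1 + mm)) with (- ((1-eps)/(1+mm) - eps/(1-mm))) in K1 by ring.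
  rewrite B in *. nra. Qed.

Lemma Fe_large (eps a : R) : 0 < eps < 1/2 -> -1 < a < 1 ->
  Fe eps a <= - (1 - h eps) * ln 2 + Rabs a.
Proof. intros He Ha. pose proof (KI eps a 0 ltac:(lra) ltac:(lra) ltac:(lra)) as K1.
  rewrite Fe_0 in K1 by lra.
  replace ((0 - a) * (eps / (1 - 0) - (1 - eps) / (1 + 0))) with (a * (1 - 2*eps)) in K1 by (field; lra).
  assert (a * (1 - 2*eps) <= Rabs a).
  { destruct (Rcase_abs a). rewrite Rabs_left by lra. nra. rewrite Rabs_right by lra. nra. }
  lra. Qed.

Lemma h_pos (eps : R) : 0 < eps < 1 -> 0 < h eps.
Proof. intros He. unfold h, log2. pose proof ln2_pos.
  assert (ln eps < 0) by (rewrite <- ln_1; apply ln_increasing; lra).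
  assert (ln (1-eps) < 0) by (rewrite <- ln_1; apply ln_increasing; lra).
  assert (0 < - eps * ln eps) by nra. assert (0 < - (1-eps) * ln (1-eps)) by nra.
  unfold Rdiv. assert (0 < / ln 2) by (apply Rinv_0_lt_compat; lra). nra. Qed.

Lemma abs_bounds (y b : R) : Rabs y <= b -> -b <= y <= b.
Proof. intros H. pose proof (Rle_abs y). pose proof (Rle_abs (-y)). rewrite Rabs_Ropp in H1. lra. Qed.

Theorem lemma2 (eps rho Rt : R)
  (Heps : 0 < eps < 1/2) (Hrho : 0 < rho < 1) (HR : 0 < Rt < 1 - h eps) :
  exists delta : R, 0 < delta /\
    forall i : nat -> Z,
      (exists N : nat, forall n : nat, (N <= n)%nat ->
         INR n * (eps - delta) < IZR (i n) < INR n * (eps + delta)) ->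
      Un_cv (fun n => num_term eps rho Rt n (i n) / den_term eps n (i n)) 1.
Proof.
  set (a0 := 1 - 2*eps). set (t := 1 - 2*rho).
  assert (Ht : Rabs t < 1) by (unfold t; apply Rabs_def1; lra).
  assert (Ht0 : 0 <= Rabs t) by apply Rabs_pos.
  set (a1 := a0 * Rabs t).
  assert (Ha1 : 0 <= a1 < a0) by (unfold a1, a0; split; nra).
  set (mm := (a1 + a0)/2).
  set (beta := (1-eps)/(1+mm) - eps/(1-mm)).
  assert (Hbeta : 0 < beta).
  { unfold beta. replace ((1-eps)/(1+mm) - eps/(1-mm)) with ((1 - 2*eps - mm)/((1+mm)*(1-mm)))
      by (unfold mm, a0 in *; field; lra).
    apply Rdiv_lt_0_compat; unfold mm, a0 in *; nra. }
  set (c := (mm - a1) * beta).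
  assert (Hc : 0 < c) by (unfold c, mm; apply Rmult_lt_0_compat; lra).
  pose proof ln2_pos as Hl2.
  set (gap := (1 - h eps - Rt) * ln 2).
  assert (Hgap : 0 < gap) by (unfold gap; apply Rmult_lt_0_compat; lra).
  set (K := ln (/eps) - ln eps).
  assert (HK : 0 < K).
  { unfold K. assert (eps < /eps). { apply Rlt_trans with 1. lra.
      rewrite <- Rinv_1. apply Rinv_lt_contravar; lra. }
    pose proof (ln_increasing eps (/eps) ltac:(lra) H). lra. }
  set (delta := Rmin (eps/2) (Rmin (c/(4*K)) (gap/(4*K)))).
  assert (Hd0 : 0 < delta).
  { unfold delta. apply Rmin_glb_lt. lra. apply Rmin_glb_lt; apply Rdiv_lt_0_compat; lra. }
  assert (Hd1 : delta <= eps/2) by apply Rmin_l.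
  assert (HKd1 : K * delta <= c/4).
  { assert (delta <= c/(4*K)) by (eapply Rle_trans; [apply Rmin_r|apply Rmin_l]).
    apply Rmult_le_compat_l with (r := K) in H; [|lra].
    replace (K * (c / (4*K))) with (c/4) in H by (field; lra). lra. }
  assert (HKd2 : K * delta <= gap/4).
  { assert (delta <= gap/(4*K)) by (eapply Rle_trans; [apply Rmin_r|apply Rmin_r]).
    apply Rmult_le_compat_l with (r := K) in H; [|lra].
    replace (K * (gap / (4*K))) with (gap/4) in H by (field; lra). lra. }
  exists delta. split; [exact Hd0|].
  intros i [N0 HN0].
  intros e He.
  destruct (pow_lt_1_zero (Rabs t) ltac:(rewrite Rabs_Rabsolu; lra) (gap/4) ltac:(lra)) as [J0 HJ0].
  set (x := Rmin 1 (c/2)).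
  assert (Hx : 0 < x <= 1).
  { unfold x. split. apply Rmin_glb_lt; lra. apply Rmin_l. }
  assert (Hx2 : 1 + x < exp (c/2)).
  { pose proof (exp_ineq1 (c/2) ltac:(lra)). assert (x <= c/2) by apply Rmin_r. lra. }
  assert (Hec : 0 < exp (c/2)) by apply exp_pos.
  set (r1 := (1 + x) * exp (-(c/2))).
  assert (Hr1 : 0 < r1 < 1).
  { unfold r1. rewrite exp_Ropp. split. apply Rmult_lt_0_compat. lra. apply Rinv_0_lt_compat; lra.
    apply Rmult_lt_reg_r with (exp (c/2)). lra. rewrite Rmult_assoc, Rinv_l; lra. }
  set (r2 := exp (-(gap/2))).
  assert (Hr2 : 0 < r2 < 1).
  { unfold r2. split. apply exp_pos. rewrite <- exp_0. apply exp_increasing. lra. }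
  set (A := / x ^ J0).
  assert (HA : 0 < A) by (unfold A; apply Rinv_0_lt_compat, pow_lt; lra).
  destruct (pow_lt_1_zero r1 ltac:(rewrite Rabs_right; lra) (e/(2*A)) ltac:(apply Rdiv_lt_0_compat; lra)) as [N1 HN1].
  destruct (pow_lt_1_zero r2 ltac:(rewrite Rabs_right; lra) (e/2) ltac:(lra)) as [N2 HN2].
  exists (N0 + N1 + N2)%nat. intros n Hn. unfold R_dist.
  specialize (HN0 n ltac:(lia)). specialize (HN1 n ltac:(lia)). specialize (HN2 n ltac:(lia)).
  rewrite Rabs_right in HN1 by (apply Rle_ge, pow_le; lra).
  rewrite Rabs_right in HN2 by (apply Rle_ge, pow_le; lra).
  destruct HN0 as [Hi1 Hi2].
  pose proof (pos_INR n) as Hn0.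
  pose proof (h_pos eps ltac:(lra)) as Hh.
  set (k := Z.to_nat (floorZ (Rt * INR n))).
  assert (Hk : INR k <= Rt * INR n).
  { unfold k, floorZ. destruct (base_Int_part (Rt * INR n)) as [B1 B2].
    destruct (Z_lt_le_dec (Int_part (Rt*INR n)) 0) as [z|z].
    - replace (Z.to_nat (Int_part (Rt * INR n))) with 0%nat by lia. simpl. nra.
    - rewrite INR_IZR_INZ, Z2Nat.id; auto. }
  assert (Hkn : (k <= n)%nat) by (apply INR_le; nra).
  assert (Hi0 : (0 <= i n)%Z) by (apply le_IZR; simpl; nra).
  set (m := Z.to_nat (i n)).
  assert (Him : i n = Z.of_nat m) by (unfold m; rewrite Z2Nat.id; auto).
  assert (HmR : INR m = IZR (i n)) by (rewrite INR_IZR_INZ, <- Him; auto).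
  assert (Hmn : (m <= n)%nat) by (apply INR_le; nra).
  set (aa := fun j => (1 - 2*eps) * (1 - 2*rho)^j).
  set (T := fun j => C k j * ((1 - aa j)/(2*eps))^m * ((1 + aa j)/(2*(1-eps)))^(n-m)).
  assert (HS : num_term eps rho Rt n (i n) / den_term eps n (i n) = sum_f_R0 T k).
  { unfold num_term. cbv zeta. fold k. rewrite Him, sum_div. apply sum_eq. intros j _.
    unfold T, aa. apply term_eq; [lra|auto]. }
  rewrite HS.
  assert (Haa : forall j, Rabs (aa j) = a0 * Rabs t ^ j).
  { intros j. unfold aa. rewrite Rabs_mult, RPow_abs. fold a0 t. rewrite (Rabs_right a0) by (unfold a0; lra). auto. }
  assert (Htj : forall j, Rabs t ^ j <= 1).
  { intros j. replace 1 with (Rabs t ^ 0) by reflexivity. apply pow_le1_dec; [lra|lia]. }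
  assert (Haa1 : forall j, -a0 <= aa j <= a0).
  { intros j. apply abs_bounds. rewrite Haa. specialize (Htj j). unfold a0 in *. nra. }
  assert (Tpos : forall j, 0 <= T j).
  { intros j. unfold T. specialize (Haa1 j). unfold a0 in *.
    apply Rmult_le_pos; [apply Rmult_le_pos|]; try apply C_nonneg; apply pow_le;
    left; apply Rdiv_lt_0_compat; lra. }
  assert (T0 : T 0%nat = 1).
  { unfold T, aa. rewrite C_n0. replace ((1 - 2*rho)^0) with 1 by reflexivity.
    replace ((1 - (1 - 2 * eps) * 1) / (2 * eps)) with 1 by (field; lra).
    replace ((1 + (1 - 2 * eps) * 1) / (2 * (1 - eps))) with 1 by (field; lra).
    rewrite !pow1. ring. }
  assert (Tb : forall j, T j <= C k j * exp (INR n * (Fe eps (aa j) + K * delta))).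
  { intros j. unfold T. rewrite Rmult_assoc. apply Rmult_le_compat_l. apply C_nonneg.
    apply term_bound; try lra; try exact (Haa1 j); auto; nra. }
  set (g := fun j => (A * exp (-(c/2)) ^ n) * (C k j * x ^ j * 1 ^ (k - j))
      + exp (INR n * (-(1 - h eps) * ln 2 + gap/2)) * (C k j * 1 ^ j * 1 ^ (k - j))).
  assert (Hexp0 : forall y, 0 < exp y) by apply exp_pos.
  assert (gpos : forall j, 0 <= g j).
  { intros j. unfold g. rewrite !pow1. pose proof (C_nonneg k j).
    assert (0 <= x ^ j) by (apply pow_le; lra).
    assert (0 <= exp (- (c / 2)) ^ n) by (apply pow_le; left; auto).
    assert (0 <= exp (INR n * (- (1 - h eps) * ln 2 + gap / 2))) by (left; auto).
    apply Rplus_le_le_0_compat; apply Rmult_le_pos; try (apply Rmult_le_pos; lra); rewrite ?Rmult_1_r; try apply Rmult_le_pos; try lra. }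
  assert (Tg : forall j, (1 <= j)%nat -> T j <= g j).
  { intros j Hj. eapply Rle_trans; [apply Tb|]. unfold g. rewrite !pow1.
    pose proof (C_nonneg k j) as HC.
    assert (0 <= x ^ j) by (apply pow_le; lra).
    assert (0 <= exp (- (c / 2)) ^ n) by (apply pow_le; left; auto).
    assert (0 <= exp (INR n * (- (1 - h eps) * ln 2 + gap / 2))) by (left; auto).
    specialize (Haa1 j). specialize (Haa j).
    destruct (lt_dec j J0) as [Hj0|Hj0].
    - assert (Hsm : Fe eps (aa j) <= - c).
      { unfold c, beta. apply Fe_small; unfold mm, a0 in *; try lra.
        split. lra. apply Rle_trans with (Rabs (aa j)). apply Rle_abs. rewrite Haa.
        unfold a1. apply Rmult_le_compat_l. lra. rewrite <- (pow_1 (Rabs t)) at 2.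
        apply pow_le1_dec; [lra|lia]. }
      assert (E1 : exp (INR n * (Fe eps (aa j) + K * delta)) <= exp (- (c/2)) ^ n).
      { rewrite <- exp_pow_n. apply exp_le_m. apply Rmult_le_compat_l; lra. }
      assert (E2 : 1 <= A * x ^ j).
      { unfold A. assert (x ^ J0 <= x ^ j) by (apply pow_le1_dec; [lra|lia]).
        assert (0 < x ^ J0) by (apply pow_lt; lra).
        apply Rmult_le_reg_l with (x ^ J0). lra. rewrite <- Rmult_assoc, Rinv_r; lra. }
      assert (C k j * exp (INR n * (Fe eps (aa j) + K * delta)) <= A * exp (- (c / 2)) ^ n * (C k j * x ^ j * 1 * 1)).
      { apply Rle_trans with (C k j * exp (-(c/2)) ^ n). apply Rmult_le_compat_l; auto.
        replace (A * exp (- (c / 2)) ^ n * (C k j * x ^ j * 1 * 1)) with ((C k j * exp (-(c/2)) ^ n) * (A * x ^ j)) by ring.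
        assert (0 <= C k j * exp (-(c/2)) ^ n) by (apply Rmult_le_pos; auto).
        nra. }
      assert (0 <= exp (INR n * (- (1 - h eps) * ln 2 + gap / 2)) * (C k j * 1 * 1)) by
        (rewrite !Rmult_1_r; apply Rmult_le_pos; auto).
      lra.
    - assert (Hlg : Fe eps (aa j) <= - (1 - h eps) * ln 2 + gap/4).
      { eapply Rle_trans. apply Fe_large. lra. unfold a0 in *; lra.
        apply Rplus_le_compat_l. rewrite Haa.
        specialize (HJ0 J0 ltac:(lia)). rewrite <- RPow_abs, Rabs_Rabsolu in HJ0.
        assert (Rabs t ^ j <= Rabs t ^ J0) by (apply pow_le1_dec; [lra|lia]).
        assert (0 <= Rabs t ^ j) by (apply pow_le; lra).
        unfold a0 in *. nra. }
      assert (E1 : exp (INR n * (Fe eps (aa j) + K * delta)) <= exp (INR n * (- (1 - h eps) * ln 2 + gap / 2))).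
      { apply exp_le_m. apply Rmult_le_compat_l; lra. }
      assert (0 <= A * exp (- (c / 2)) ^ n * (C k j * x ^ j * 1 * 1)) by
        (rewrite !Rmult_1_r; apply Rmult_le_pos; apply Rmult_le_pos; lra).
      assert (C k j * exp (INR n * (Fe eps (aa j) + K * delta)) <=
              exp (INR n * (- (1 - h eps) * ln 2 + gap / 2)) * (C k j * 1 * 1)).
      { rewrite !Rmult_1_r, Rmult_comm. apply Rmult_le_compat_r; auto. }
      lra. }
  pose proof (sum_ge_first T k Tpos) as Lo. rewrite T0 in Lo.
  pose proof (sum_bound T g k ltac:(lra) Tg gpos) as Up.
  unfold g in Up. rewrite sum_lin, <- !binomial in Up.
  assert (B1 : A * exp (- (c / 2)) ^ n * (x + 1) ^ k <= A * r1 ^ n).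
  { unfold r1. rewrite Rpow_mult_distr.
    assert ((x+1)^k <= (1+x)^n) by (rewrite Rplus_comm; apply Rle_pow; [lra|auto]).
    assert (0 <= exp (- (c / 2)) ^ n) by (apply pow_le; left; auto).
    assert (0 <= A * exp (- (c / 2)) ^ n) by (apply Rmult_le_pos; lra).
    replace (A * ((1 + x) ^ n * exp (- (c / 2)) ^ n)) with (A * exp (- (c / 2)) ^ n * (1 + x) ^ n) by ring.
    apply Rmult_le_compat_l; auto. }
  assert (B2 : exp (INR n * (- (1 - h eps) * ln 2 + gap / 2)) * (1 + 1) ^ k <= r2 ^ n).
  { unfold r2. rewrite <- exp_pow_n.
    replace (1 + 1) with (exp (ln 2)) by (rewrite exp_ln; lra).
    rewrite <- exp_pow_n, <- exp_plus. apply exp_le_m.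
    unfold gap. nra. }
  assert (A * r1 ^ n < e / 2).
  { apply Rmult_lt_compat_l with (r := A) in HN1; auto.
    replace (A * (e / (2 * A))) with (e/2) in HN1 by (field; lra). lra. }
  rewrite Rabs_right by lra. lra.
Qed.
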